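(* Let $T>0$ and $\beta>0$ be fixed. Then for every $R>0$, \[ \lim_{\mu\to 0}\ \sup_{|x|_{H^\beta}+\sqrt{\mu}\,|y|_{H}\leq R}\ \sup_{t\in[0,T]} \left|\Pi_1 S_\mu(t)(x,y)-S(t)x\right|_{H}=0, \] where the inner supremum is over $x\in H^\beta$, $y\in H$.
   Context: Let $D\subset\mathbb{R}^d$ be a bounded open domain with smooth boundary and $H=L^2(D)$ with norm $|\cdot|_H$ and inner product $\langle\cdot,\cdot\rangle_H$. Let $A$ be the realization in $H$ of the Laplacian with Dirichlet boundary conditions; let $\{e_k\}_{k\in\mathbb{N}}$ be a complete orthonormal system of $H$ and $0<\alpha_1\le\alpha_2\le\cdots\to\infty$ with $Ae_k=-\alpha_k e_k$. For $\beta\in\mathbb{R}$, $H^\beta$ is the completion of $C_0(D)$ with respect to $|x|_{H^\beta}^2=\sum_k \alpha_k^\beta|\langle x,e_k\rangle_H|^2$, and $\mathcal{H}_\beta:=H^\beta\times H^{\beta-1}$, with $\Pi_1(x,y)=x$, $\Pi_2(x,y)=y$. $S(t)$, $t\ge0$, denotes the semigroup generated by $A$. For $\mu>0$ let $A_\mu(x,y)=\frac1\mu(\mu y, Ax-y)$; it generates a strongly continuous group $S_\mu(t)$ on every $\mathcal{H}_\beta$ (these are compatible with each other); note $(x,y)\in H^\beta\times H\subset \mathcal{H}_0$ for $\beta>0$. *)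

(* Defs.v *)
From HB Require Import structures.
From mathcomp Require Import all_boot all_order all_algebra.
From mathcomp Require Import all_classical all_reals all_analysis.
Set Implicit Arguments. Unset Strict Implicit. Unset Printing Implicit Defensive.
Import Order.TTheory GRing.Theory Num.Theory.
Import numFieldNormedType.Exports.
Local Open Scope classical_set_scope.
Local Open Scope ring_scope.

(* Spectral model: via the orthonormal eigenbasis (e_k) of the Dirichlet
   Laplacian, H = L^2(D) is identified isometrically with square-summable
   coefficient sequences x : nat -> R (x k = <x, e_k>_H), and A e_k = -alpha k e_k.
   Indices start at 0 (alpha 0 is the paper's alpha_1). *)

Section Defs.
Variable R : realType.

Definition esqrt (e : \bar R) : \bar R :=
  match e with
  | EFin r => (Num.sqrt r)%:E
  | +oo%E => +oo%E
  | -oo%E => 0%E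
  end.

Definition Hsq (u : nat -> R) : \bar R := (\sum_(0 <= k <oo) ((u k) ^+ 2)%:E)%E.
Definition Hnorm (u : nat -> R) : \bar R := esqrt (Hsq u).
Definition inH (u : nat -> R) : Prop := (Hsq u < +oo)%E.

Definition Hbsq (alpha : nat -> R) (beta : R) (x : nat -> R) : \bar R :=
  (\sum_(0 <= k <oo) ((alpha k `^ beta) * (x k) ^+ 2)%:E)%E.
Definition inHb alpha beta (x : nat -> R) : Prop := (Hbsq alpha beta x < +oo)%E.
(* real-valued norms, meaningful on elements of the respective spaces *)
Definition Hbnorm alpha beta (x : nat -> R) : R := Num.sqrt (fine (Hbsq alpha beta x)).
Definition Hnormr (y : nat -> R) : R := Num.sqrt (fine (Hsq y)).

Definition expm2 (M : 'M[R]_2) : 'M[R]_2 :=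
  \matrix_(i, j) limn (series (fun n => (M ^+ n) i j / (n`!)%:R)).

(* the restriction of A_mu(x,y) = (y, (Ax - y)/mu) to the k-th mode,
   acting on column vectors (x_k, y_k) *)
Definition Amu_mode (alpha : nat -> R) (mu : R) (k : nat) : 'M[R]_2 :=
  \matrix_(i, j)
    (if (i : nat) == 0%N then (if (j : nat) == 0%N then 0 else 1)
     else (if (j : nat) == 0%N then - alpha k / mu else - 1 / mu)).

(* the group S_mu(t) generated by A_mu (diagonal in the eigenbasis):
   on each mode it is the matrix exponential exp(t A_mu,k) *)
Definition Smu (alpha : nat -> R) (mu t : R) (xy : (nat -> R) * (nat -> R))
  : (nat -> R) * (nat -> R) :=
  (fun k => let E := expm2 (t *: Amu_mode alpha mu k) in
            E 0 0 * xy.1 k + E 0 1 * xy.2 k,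
   fun k => let E := expm2 (t *: Amu_mode alpha mu k) in
            E 1 0 * xy.1 k + E 1 1 * xy.2 k).

Definition Pi1 (xy : (nat -> R) * (nat -> R)) : nat -> R := xy.1.

Definition Sheat (alpha : nat -> R) (t : R) (x : nat -> R) : nat -> R :=
  fun k => expR (- (alpha k * t)) * x k.

Definition sup_dev (alpha : nat -> R) (beta T Rr mu : R) : \bar R :=
  ereal_sup [set e | exists x y t,
     [/\ inHb alpha beta x, inH y,
         Hbnorm alpha beta x + Num.sqrt mu * Hnormr y <= Rr,
         0 <= t <= T &
         e = Hnorm (fun k => Pi1 (Smu alpha mu t (x, y)) k - Sheat alpha t x k)]].

End Defs.

(* Main.v *)
Require Import Defs.
From HB Require Import structures.
From mathcomp Require Import all_boot all_order all_algebra.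
From mathcomp Require Import all_classical all_reals all_analysis.
From mathcomp Require Import ring lra.
Set Implicit Arguments. Unset Strict Implicit. Unset Printing Implicit Defensive.
Import Order.TTheory GRing.Theory Num.Theory.
Import numFieldNormedType.Exports.
Local Open Scope classical_set_scope.
Local Open Scope ring_scope.

Section Expm.
Variable R : realType.
Variable M : 'M[R]_2.

Definition cf (i j : 'I_2) (n : nat) : R := (M ^+ n) i j / n`!%:R.
Definition mnm : R := `|M 0 0| + `|M 0 1| + `|M 1 0| + `|M 1 1|.

Lemma mnm_ge0 : 0 <= mnm.
Proof. by rewrite /mnm !addr_ge0. Qed.

Lemma mulE (A B : 'M[R]_2) i j : (A * B) i j = A i 0 * B 0 j + A i 1 * B 1 j.
Proof.
rewrite -mulmxE mxE !big_ord_recl big_ord0 addr0.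
have e0 : (ord0 : 'I_2) = 0 by apply/val_inj.
have e1 : lift ord0 (ord0 : 'I_1) = 1 :> 'I_2 by apply/val_inj.
by rewrite e0 e1.
Qed.

Lemma ord2_cases (i : 'I_2) : i = 0 \/ i = 1.
Proof.
case: i => [[|[|k]] Hk]; [left|right|by []]; exact/val_inj.
Qed.

Lemma entry_bound n i j : `|(M ^+ n) i j| <= mnm ^+ n.
Proof.
elim: n i j => [|n IH] i j.
  rewrite expr0 !mxE; case: (i == j) => /=; by rewrite ?normr1 ?normr0.
rewrite exprS mulE exprS.
apply: le_trans (ler_normD _ _) _.
rewrite !normrM.
have h0 := IH 0 j; have h1 := IH 1 j.
have : `|M i 0| + `|M i 1| <= mnm.
  have := normr_ge0 (M 0 0); have := normr_ge0 (M 0 1).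
  have := normr_ge0 (M 1 0); have := normr_ge0 (M 1 1).
  rewrite /mnm; case: (ord2_cases i) => -> *; lra.
move=> hm.
have g0 : 0 <= mnm ^+ n by rewrite exprn_ge0 // mnm_ge0.
apply: le_trans (_ : `|M i 0| * mnm ^+ n + `|M i 1| * mnm ^+ n <= _).
  by rewrite lerD // ler_wpM2l.
by rewrite -mulrDl ler_wpM2r.
Qed.


Lemma cvg_ps_bound (d : nat -> R) (C m x : R) : 0 <= C -> 0 <= m ->
  (forall n, `|d n| <= C * (m ^+ n / n`!%:R)) -> cvgn (pseries d x).
Proof.
move=> C0 m0 hd; apply: normed_cvg.
have -> : [normed series (fun i => d i * x ^+ i)] =
    series (fun n => `|d n * x ^+ n|) by [].
apply: (@series_le_cvg _ _ (C *: exp_coeff (m * `|x|))).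
- by move=> n.
- by move=> n; rewrite /= mulr_ge0 // exp_coeff_ge0 // mulr_ge0.
- move=> n; rewrite /= /exp_coeff /= normrM normrX.
  have -> : (C *: (fun n0 : nat => (m * `|x|) ^+ n0 / n0`!%:R)) n =
     C * ((m * `|x|) ^+ n / n`!%:R) by [].
  rewrite exprMn.
  have := hd n; have := normr_ge0 (x ^+ n).
  rewrite normrX => h1 h2.
  have -> : C * (m ^+ n * `|x| ^+ n / n`!%:R) = (C * (m ^+ n / n`!%:R)) * `|x| ^+ n.
    by rewrite !mulrA mulrAC.
  by rewrite ler_wpM2r // exprn_ge0.
- by apply: is_cvg_seriesZ; exact: is_cvg_series_exp_coeff.
Qed.


Definition cfk (k : nat) (i j : 'I_2) (n : nat) : R := (M ^+ (k + n)) i j / n`!%:R.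

Lemma expm2_ps t i j : expm2 (t *: M) i j = limn (pseries (cfk 0 i j) t).
Proof.
rewrite /expm2 mxE /pseries /cfk; congr (limn (series _)).
by apply/funext => n /=; rewrite exprZn mxE add0n; lra.
Qed.

Lemma psd_cfk k i j : pseries_diffs (cfk k i j) = cfk k.+1 i j.
Proof.
apply/funext => n; rewrite /pseries_diffs /cfk factS natrM addnS -addSn.
have h1 : n.+1%:R != 0 :> R by rewrite pnatr_eq0.
have h2 : n`!%:R != 0 :> R by rewrite pnatr_eq0 -lt0n fact_gt0.
by field; rewrite h2 nat1r h1.
Qed.

Lemma cfk_bound k i j n : `|cfk k i j n| <= mnm ^+ k * (mnm ^+ n / n`!%:R).
Proof.
rewrite /cfk normrM mulrA -exprD normfV normr_nat.
by rewrite ler_wpM2r ?invr_ge0 // entry_bound.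
Qed.

Lemma cvg_cfk k i j x : cvgn (pseries (cfk k i j) x).
Proof.
apply: (@cvg_ps_bound _ (mnm ^+ k) mnm); rewrite ?exprn_ge0 ?mnm_ge0 //.
exact: cfk_bound.
Qed.

Lemma expm2_derive (t : R) (i j : 'I_2) :
  is_derive t (1 : R) (fun s : R => expm2 (s *: M) i j)
     (M i 0 * expm2 (t *: M) 0 j + M i 1 * expm2 (t *: M) 1 j).
Proof.
have -> : (fun s => expm2 (s *: M) i j) = (fun s => limn (pseries (cfk 0 i j) s)).
  by apply/funext => s; rewrite expm2_ps.
apply: is_derive_eq.
  apply: (@pseries_snd_diffs _ _ (`|t| + 1)); rewrite ?psd_cfk; try exact: cvg_cfk.
  by rewrite [X in _ < X]ger0_norm ?addr_ge0 // ltrDl.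
rewrite psd_cfk !expm2_ps.
have -> : pseries (cfk 1 i j) t = series (M i 0 *: (fun n => cfk 0 0 j n * t ^+ n)
   + M i 1 *: (fun n => cfk 0 1 j n * t ^+ n)).
  congr series; apply/funext => n /=.
  have sc : forall a b : R, a *: b = a * b by [].
  by rewrite /cfk add1n exprS mulE /= !fctE add0n !sc !mulrA !mulrDl.
have c0 := @cvg_cfk 0 0 j t; have c1 := @cvg_cfk 0 1 j t.
rewrite lim_seriesD; [|exact: is_cvg_seriesZ c0|exact: is_cvg_seriesZ c1].
by rewrite (lim_seriesZ _ c0) (lim_seriesZ _ c1).
Qed.

Lemma expm2_0 i j : expm2 (0 *: M) i j = (1 : 'M[R]_2) i j.
Proof.
rewrite expm2_ps; apply: lim_near_cst => //.
near=> n; rewrite -[n]prednK; last by near: n; exists 1%N.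
rewrite /pseries /series /= big_nat_recl // big1 ?addr0.
  by rewrite /cfk expr0 mulr1 add0n expr0 fact0 divr1.
by move=> k _; rewrite expr0n mulr0.
Unshelve. all: by end_near.
Qed.

End Expm.
Section Der.
Variable R : realType.
Implicit Types (f g : R -> R) (x df dg c : R).

Lemma dmul f g x df dg : is_derive x (1:R) f df -> is_derive x (1:R) g dg ->
  is_derive x (1:R) (fun t => f t * g t) (f x * dg + g x * df).
Proof. move=> hf hg; exact: (is_deriveM hf hg). Qed.

Lemma dadd f g x df dg : is_derive x (1:R) f df -> is_derive x (1:R) g dg ->
  is_derive x (1:R) (fun t => f t + g t) (df + dg).
Proof. move=> hf hg; exact: (is_deriveD hf hg). Qed.

Lemma dscal f x df c : is_derive x (1:R) f df ->
  is_derive x (1:R) (fun t => c * f t) (c * df).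
Proof. move=> hf; exact: (is_deriveZ c hf). Qed.

Lemma dcst x c : is_derive x (1:R) (fun _ => c) 0.
Proof. exact: is_derive_cst. Qed.

Lemma did x : is_derive x (1:R) (fun t => t) 1.
Proof. exact: is_derive_id. Qed.

Lemma dexpl x c : is_derive x (1:R) (fun t => expR (- (c * t))) (- c * expR (- (c * x))).
Proof.
have h1 : is_derive x (1:R) (fun t => - (c * t)) (- c).
  have h := is_deriveN (dscal c (did x)); rewrite mulr1 in h; exact: h.
have := @is_derive1_comp R expR (fun t => - (c * t)) x _ _ (is_derive_expR _) h1.
by rewrite mulrC.
Qed.

Lemma nonincr f (df : R -> R) : (forall x, is_derive x (1:R) f (df x)) ->
  (forall x, 0 < x -> df x <= 0) -> forall t, 0 <= t -> f t <= f 0.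
Proof.
move=> hd hneg t t0.
have dv : forall x, derivable f x 1 by move=> x; have [] := hd x.
apply: (@ler0_derive1_le_cc R f 0 t).
- by move=> x _; exact: dv.
- move=> x; rewrite in_itv /= => /andP[x0 _].
  by rewrite derive1E derive_val; exact: hneg.
- by apply: derivable_within_continuous => x _; exact: dv.
- by rewrite in_itv /= lexx t0.
- by rewrite in_itv /= lexx t0.
- exact: t0.
Qed.


Section ODE.
Variables (mu a : R).
Hypotheses (mu0 : 0 < mu) (a0 : 0 < a).

Lemma P_bound (P Q : R -> R) :
  (forall x, is_derive x (1:R) P (Q x)) ->
  (forall x, is_derive x (1:R) Q (- a / mu * P x + - 1 / mu * Q x)) ->
  P 0 = 0 -> Q 0 = 1 -> forall t, 0 <= t -> P t ^+ 2 <= 4 * mu ^+ 2.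
Proof.
move=> dP dQ P0 Q0 t t0.
pose L t := (mu * Q t + P t) * (mu * Q t + P t) + mu ^+ 2 * (Q t * Q t)
   + (2 * a * mu) * (P t * P t).
have dL : forall x, is_derive x (1:R) L (- 2 * a * (P x * P x) - 2 * mu * (Q x * Q x)).
  move=> x.
  have h1 := dadd (dscal mu (dQ x)) (dP x).
  have h := dadd (dadd (dmul h1 h1) (dscal (mu ^+ 2) (dmul (dQ x) (dQ x))))
     (dscal (2 * a * mu) (dmul (dP x) (dP x))).
  apply: is_derive_eq h _.
  have mu1 : mu != 0 by rewrite gt_eqF.
  by field.
have hneg : forall x, 0 < x -> - 2 * a * (P x * P x) - 2 * mu * (Q x * Q x) <= 0.
  move=> x _.
  have := mulr_ge0 (ltW a0) (sqr_ge0 (P x)); have := mulr_ge0 (ltW mu0) (sqr_ge0 (Q x)).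
  rewrite !expr2 => *; nra.
have := nonincr dL hneg t0.
rewrite /L P0 Q0 !mulr0 !addr0 mulr1 !expr2.
have := mulr_ge0 (mulr_ge0 (ltW a0) (ltW mu0)) (sqr_ge0 (P t)).
have := sqr_ge0 (mu * Q t + P t + mu * Q t).
rewrite !expr2 => *; nra.
Qed.


Lemma U_bound1 (U V : R -> R) :
  (forall x, is_derive x (1:R) U (V x)) ->
  (forall x, is_derive x (1:R) V (- a / mu * U x + - 1 / mu * V x)) ->
  U 0 = 1 -> V 0 = 0 -> forall t, 0 <= t -> U t ^+ 2 <= 1.
Proof.
move=> dU dV U0 V0 t t0.
pose L t := mu * (V t * V t) + a * (U t * U t).
have dL : forall x, is_derive x (1:R) L (- 2 * (V x * V x)).
  move=> x.
  have h := dadd (dscal mu (dmul (dV x) (dV x))) (dscal a (dmul (dU x) (dU x))).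
  apply: is_derive_eq h _.
  have mu1 : mu != 0 by rewrite gt_eqF.
  by field.
have hneg : forall x, 0 < x -> - 2 * (V x * V x) <= 0.
  move=> x _; have := sqr_ge0 (V x); rewrite expr2 => *; nra.
have := nonincr dL hneg t0.
rewrite /L U0 V0 !mulr0 !add0r mulr1 !expr2 => h.
rewrite -(ler_pM2l a0) mulr1.
have := mulr_ge0 (ltW mu0) (sqr_ge0 (V t)).
rewrite !expr2 => *; lra.
Qed.

Lemma U_bound2 (U V : R -> R) :
  (forall x, is_derive x (1:R) U (V x)) ->
  (forall x, is_derive x (1:R) V (- a / mu * U x + - 1 / mu * V x)) ->
  U 0 = 1 -> V 0 = 0 -> forall t, 0 <= t ->
  (U t - expR (- (a * t))) ^+ 2 <= mu * a + mu ^+ 2 * a ^+ 3 * t / 2.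
Proof.
move=> dU dV U0 V0 t t0.
pose q t := expR (- (a * t)).
pose K := mu ^+ 2 * a ^+ 4 / 2.
pose L t := mu * ((V t + a * q t) * (V t + a * q t))
   + a * ((U t + (-1) * q t) * (U t + (-1) * q t)) + (- K) * t.
have dL : forall x, is_derive x (1:R) L
   (- 2 * ((V x + a * q x) * (V x + a * q x))
    - 2 * mu * a ^+ 2 * q x * (V x + a * q x) - K).
  move=> x.
  have dq := dexpl x a.
  have hs := dadd (dV x) (dscal a dq).
  have hw := dadd (dU x) (dscal (-1) dq).
  have h := dadd (dadd (dscal mu (dmul hs hs)) (dscal a (dmul hw hw)))
              (dscal (- K) (did x)).
  apply: is_derive_eq h _.
  rewrite /q.
  have mu1 : mu != 0 by rewrite gt_eqF.
  by field.
have hneg : forall x, 0 < x -> - 2 * ((V x + a * q x) * (V x + a * q x))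
    - 2 * mu * a ^+ 2 * q x * (V x + a * q x) - K <= 0.
  move=> x x0.
  have q1 : q x <= 1 by rewrite /q expR_le1 oppr_le0 mulr_ge0 // ltW.
  have q0 : 0 <= q x by rewrite /q expR_ge0.
  have hq2 : q x * q x <= 1 by rewrite -[1]mulr1 ler_pM.
  have c0 : 0 <= mu ^+ 2 * a ^+ 4 by rewrite mulr_ge0 // exprn_ge0 // ltW.
  have h1 : mu ^+ 2 * a ^+ 4 * (q x * q x) <= mu ^+ 2 * a ^+ 4 by
    rewrite -[X in _ <= X]mulr1 ler_wpM2l.
  have h2 := sqr_ge0 (2 * (V x + a * q x) + mu * a ^+ 2 * q x).
  rewrite /K; rewrite expr2 in h2; nra.
have L0 : L 0 = mu * (a * a).
  by rewrite /L /q U0 V0 mulr0 oppr0 expR0; ring.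
have := nonincr dL hneg t0; rewrite L0 /L /q => h.
rewrite -(ler_pM2l a0).
have e : a * (mu * a + mu ^+ 2 * a ^+ 3 * t / 2) = mu * (a * a) + K * t.
  by rewrite /K; field.
rewrite e.
have := mulr_ge0 (ltW mu0) (sqr_ge0 (V t + a * expR (- (a * t)))).
rewrite expr2 !expr2 => hh.
rewrite !mulN1r in h.
lra.
Qed.

End ODE.

End Der.

Section Mode.
Variable R : realType.

Lemma ord_case0 : (0 : 'I_2) == 0. Proof. by []. Qed.

Lemma mode_bounds (alpha : nat -> R) (mu : R) k (t : R) :
  0 < mu -> 0 < alpha k -> 0 <= t ->
  [/\ (expm2 (t *: Amu_mode alpha mu k) 0 1) ^+ 2 <= 4 * mu ^+ 2,
      (expm2 (t *: Amu_mode alpha mu k) 0 0 - expR (- (alpha k * t))) ^+ 2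
         <= mu * alpha k + mu ^+ 2 * alpha k ^+ 3 * t / 2 &
      (expm2 (t *: Amu_mode alpha mu k) 0 0) ^+ 2 <= 1].
Proof.
move=> mu0 a0 t0.
set M := Amu_mode alpha mu k.
have M00 : M 0 0 = 0 by rewrite /M /Amu_mode mxE.
have M01 : M 0 1 = 1 by rewrite /M /Amu_mode mxE.
have M10 : M 1 0 = - alpha k / mu by rewrite /M /Amu_mode mxE.
have M11 : M 1 1 = - 1 / mu by rewrite /M /Amu_mode mxE.
have d0 : forall j x, is_derive x (1:R) (fun s => expm2 (s *: M) 0 j)
    (expm2 (x *: M) 1 j).
  move=> j x; apply: is_derive_eq (expm2_derive M x 0 j) _.
  by rewrite M00 M01 mul0r add0r mul1r.
have d1 : forall j x, is_derive x (1:R) (fun s => expm2 (s *: M) 1 j)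
    (- alpha k / mu * expm2 (x *: M) 0 j + - 1 / mu * expm2 (x *: M) 1 j).
  move=> j x; apply: is_derive_eq (expm2_derive M x 1 j) _.
  by rewrite M10 M11.
have i00 : expm2 (0 *: M) 0 0 = 1 by rewrite expm2_0 !mxE.
have i01 : expm2 (0 *: M) 0 1 = 0 by rewrite expm2_0 !mxE.
have i10 : expm2 (0 *: M) 1 0 = 0 by rewrite expm2_0 !mxE.
have i11 : expm2 (0 *: M) 1 1 = 1 by rewrite expm2_0 !mxE.
split.
- exact: (P_bound mu0 a0 (d0 1) (d1 1) i01 i11 t0).
- exact: (U_bound2 mu0 a0 (d0 0) (d1 0) i00 i10 t0).
- exact: (U_bound1 mu0 a0 (d0 0) (d1 0) i00 i10 t0).
Qed.

End Mode.

Section Pointwise.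
Variable R : realType.

Lemma sq_sum_le (p r : R) : (p + r) ^+ 2 <= 2 * p ^+ 2 + 2 * r ^+ 2.
Proof. have := sqr_ge0 (p - r); rewrite !expr2 => h; nra. Qed.

Lemma pt_bound (alpha : nat -> R) (beta A T mu t : R) (k : nat) (x y : R) :
  0 < alpha 0%N -> alpha 0%N <= alpha k -> 0 < mu -> 0 < A -> 0 < beta ->
  0 <= t -> t <= T ->
  (expm2 (t *: Amu_mode alpha mu k) 0 0 * x + expm2 (t *: Amu_mode alpha mu k) 0 1 * y
     - expR (- (alpha k * t)) * x) ^+ 2
   <= 2 * (4 / A `^ beta + (mu * A + mu ^+ 2 * A ^+ 3 * T / 2) / alpha 0%N `^ beta)
        * (alpha k `^ beta * x ^+ 2) + 8 * mu ^+ 2 * y ^+ 2.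
Proof.
move=> a00 a0k mu0 A0 b0 t0 tT.
have ak : 0 < alpha k by apply: lt_le_trans a0k.
have [hP hU2 hU1] := mode_bounds mu0 ak t0.
set u := expm2 (t *: Amu_mode alpha mu k) 0 0 in hU2 hU1 *.
set v := expm2 (t *: Amu_mode alpha mu k) 0 1 in hP *.
set q := expR (- (alpha k * t)) in hU2 *.
set a := alpha k in ak a0k hU2 *.
set h := mu * A + mu ^+ 2 * A ^+ 3 * T / 2.
set G := 4 / A `^ beta + h / alpha 0%N `^ beta.
have Ab : 0 < A `^ beta by apply: powR_gt0.
have a0b : 0 < alpha 0%N `^ beta by apply: powR_gt0.
have ab : alpha 0%N `^ beta <= a `^ beta.
  by apply: ge0_ler_powR; rewrite ?nnegrE ?(ltW b0) ?(ltW a00) ?(ltW ak).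
have h0 : 0 <= h.
  have T0 : 0 <= T := le_trans t0 tT.
  have m2 : 0 <= mu ^+ 2 := exprn_ge0 2 (ltW mu0).
  have A3 : 0 <= A ^+ 3 := exprn_ge0 3 (ltW A0).
  rewrite /h; apply: addr_ge0; first exact: mulr_ge0 (ltW mu0) (ltW A0).
  by apply: mulr_ge0; [apply: mulr_ge0; [exact: mulr_ge0|]|rewrite invr_ge0].
have q0 : 0 <= q by rewrite /q expR_ge0.
have q1 : q <= 1 by rewrite /q expR_le1 oppr_le0 mulr_ge0 // ltW.
have hg : (u - q) ^+ 2 <= G * a `^ beta.
  rewrite /G mulrDl.
  have t1 : 0 <= 4 / A `^ beta * a `^ beta by rewrite !mulr_ge0 ?invr_ge0 ?powR_ge0 // ltW.
  have t2 : 0 <= h / alpha 0%N `^ beta * a `^ beta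
    by rewrite !mulr_ge0 ?invr_ge0 ?powR_ge0 // ltW.
  case: (leP A a) => hA.
  - have Aab : A `^ beta <= a `^ beta.
      by apply: ge0_ler_powR; rewrite ?nnegrE ?(ltW b0) ?(ltW A0) ?(ltW ak).
    have : 4 <= 4 / A `^ beta * a `^ beta.
      have Ab0 : A `^ beta != 0 by rewrite gt_eqF.
      have -> : 4 / A `^ beta * a `^ beta = 4 + 4 / A `^ beta * (a `^ beta - A `^ beta).
        by field.
      by rewrite lerDl mulr_ge0 ?divr_ge0 ?subr_ge0 // ltW.
    have := sq_sum_le u (- q); rewrite sqrrN.
    have : q ^+ 2 <= 1 by rewrite expr2 -[1]mulr1 ler_pM.
    move=> *; lra.
  - have hh : mu * a + mu ^+ 2 * a ^+ 3 * t / 2 <= h.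
      have e1 : mu * a <= mu * A by rewrite ler_wpM2l // ltW.
      have e2 : a ^+ 3 * t <= A ^+ 3 * T.
        apply: ler_pM => //; first exact: exprn_ge0 (ltW ak).
        by apply: lerXn2r; rewrite ?nnegrE ?(ltW ak) ?(ltW A0) ?(ltW hA).
      have e3 : mu ^+ 2 * (a ^+ 3 * t) <= mu ^+ 2 * (A ^+ 3 * T).
        by rewrite ler_wpM2l // exprn_ge0 // ltW.
      rewrite /h; lra.
    have : h <= h / alpha 0%N `^ beta * a `^ beta.
      have a0b0 : alpha 0%N `^ beta != 0 by rewrite gt_eqF.
      have -> : h / alpha 0%N `^ beta * a `^ beta
          = h + h / alpha 0%N `^ beta * (a `^ beta - alpha 0%N `^ beta).
        by field.
      by rewrite lerDl mulr_ge0 ?divr_ge0 ?subr_ge0 // ltW.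
    move=> *; lra.
have e : u * x + v * y - q * x = (u - q) * x + v * y by ring.
rewrite e; apply: le_trans (sq_sum_le _ _) _.
rewrite !exprMn.
have : (u - q) ^+ 2 * x ^+ 2 <= (G * a `^ beta) * x ^+ 2.
  by rewrite ler_wpM2r // sqr_ge0.
have : v ^+ 2 * y ^+ 2 <= 4 * mu ^+ 2 * y ^+ 2.
  by rewrite ler_wpM2r // sqr_ge0.
rewrite -!mulrA => *; lra.
Qed.

End Pointwise.

Section Series.
Variable R : realType.
Local Open Scope ereal_scope.

Lemma esqrt_ge0 (e : \bar R) : 0 <= esqrt e.
Proof. by case: e => [r| |] //=; rewrite lee_fin sqrtr_ge0. Qed.

Lemma esqrt_le (e : \bar R) (B : R) : 0 <= e -> e <= B%:E -> esqrt e <= (Num.sqrt B)%:E.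
Proof.
case: e => [r| |] //= r0 rB.
by rewrite lee_fin ler_wsqrtr // -lee_fin.
Qed.

Lemma Hsq_ge0 (u : nat -> R) : 0 <= Hsq u.
Proof. by apply: nneseries_ge0 => n _ _; rewrite lee_fin sqr_ge0. Qed.

Lemma Hbsq_ge0 (alpha : nat -> R) beta (u : nat -> R) : 0 <= Hbsq alpha beta u.
Proof. by apply: nneseries_ge0 => n _ _; rewrite lee_fin mulr_ge0 ?powR_ge0 ?sqr_ge0. Qed.

Lemma Hsq_fin (u : nat -> R) : inH u -> Hsq u = ((Hnormr u) ^+ 2)%:E.
Proof.
move=> hu; rewrite /Hnormr sqr_sqrtr ?fine_ge0 ?Hsq_ge0 // fineK //.
by rewrite ge0_fin_numE ?Hsq_ge0.
Qed.

Lemma Hbsq_fin (alpha : nat -> R) beta (u : nat -> R) : inHb alpha beta u ->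
  Hbsq alpha beta u = ((Hbnorm alpha beta u) ^+ 2)%:E.
Proof.
move=> hu; rewrite /Hbnorm sqr_sqrtr ?fine_ge0 ?Hbsq_ge0 // fineK //.
by rewrite ge0_fin_numE ?Hbsq_ge0.
Qed.

End Series.

Section Dev.
Variable R : realType.

Lemma dev_bound (alpha : nat -> R) (beta A T mu Rr t : R) (x y : nat -> R) :
  0 < alpha 0%N -> (forall k, alpha 0%N <= alpha k) -> 0 < mu -> 0 < A -> 0 < beta ->
  0 <= t -> t <= T -> inHb alpha beta x -> inH y ->
  Hbnorm alpha beta x + Num.sqrt mu * Hnormr y <= Rr ->
  (Hnorm (fun k => (Pi1 (Smu alpha mu t (x, y)) k - Sheat alpha t x k)%R) <=
   (Num.sqrt (2 * (4 / A `^ beta + (mu * A + mu ^+ 2 * A ^+ 3 * T / 2) / alpha 0%N `^ beta)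
      * Rr ^+ 2 + 8 * mu * Rr ^+ 2))%:E)%E.
Proof.
move=> a00 a0k mu0 A0 b0 t0 tT hx hy hR.
set C := 2 * (4 / A `^ beta + (mu * A + mu ^+ 2 * A ^+ 3 * T / 2) / alpha 0%N `^ beta).
have C0 : 0 <= C.
  have T0 : 0 <= T := le_trans t0 tT.
  have m2 : 0 <= mu ^+ 2 := exprn_ge0 2 (ltW mu0).
  have A3 : 0 <= A ^+ 3 := exprn_ge0 3 (ltW A0).
  have h0 : 0 <= mu * A + mu ^+ 2 * A ^+ 3 * T / 2.
    apply: addr_ge0; first exact: mulr_ge0 (ltW mu0) (ltW A0).
    by apply: mulr_ge0; [apply: mulr_ge0; [exact: mulr_ge0|]|rewrite invr_ge0].
  apply: mulr_ge0 => //; apply: addr_ge0; apply: divr_ge0 => //; exact: powR_ge0.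
set d := fun k => _.
have hd : forall k, d k ^+ 2 <= C * (alpha k `^ beta * x k ^+ 2) + 8 * mu ^+ 2 * y k ^+ 2.
  move=> k; rewrite /d /Pi1 /Smu /Sheat /=.
  exact: pt_bound.
apply: esqrt_le; first exact: Hsq_ge0.
have S1 : (Hsq d <= C%:E * Hbsq alpha beta x + (8 * mu ^+ 2)%:E * Hsq y)%E.
  rewrite /Hsq /Hbsq -nneseriesZl; last by move=> i _; rewrite lee_fin mulr_ge0 ?powR_ge0 ?sqr_ge0.
  rewrite -nneseriesZl; last by move=> i _; rewrite lee_fin sqr_ge0.
  rewrite -nneseriesD; last 2 first.
  - by move=> i _ _; rewrite -EFinM lee_fin mulr_ge0 // mulr_ge0 ?powR_ge0 ?sqr_ge0.
  - move=> i _ _; rewrite -EFinM lee_fin; apply: mulr_ge0; last exact: sqr_ge0.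
    by apply: mulr_ge0 => //; exact: exprn_ge0 (ltW mu0).
  apply: lee_nneseries; first by move=> i _ _; rewrite lee_fin sqr_ge0.
  by move=> n _; rewrite -!EFinM -EFinD lee_fin.
apply: le_trans S1 _.
rewrite Hsq_fin // Hbsq_fin // -!EFinM -EFinD lee_fin.
set p := Hbnorm alpha beta x in hR *.
set r := Hnormr y in hR *.
have p0 : 0 <= p by rewrite /p /Hbnorm sqrtr_ge0.
have r0 : 0 <= r by rewrite /r /Hnormr sqrtr_ge0.
have s0 : 0 <= Num.sqrt mu by rewrite sqrtr_ge0.
have sr0 : 0 <= Num.sqrt mu * r by rewrite mulr_ge0.
have hp : p ^+ 2 <= Rr ^+ 2.
  apply: lerXn2r; rewrite ?nnegrE //; first by rewrite (le_trans p0) // (le_trans _ hR) // lerDl.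
  by rewrite (le_trans _ hR) // lerDl.
have hsr : (Num.sqrt mu * r) ^+ 2 <= Rr ^+ 2.
  apply: lerXn2r; rewrite ?nnegrE //; first by rewrite (le_trans sr0) // (le_trans _ hR) // lerDr.
  by rewrite (le_trans _ hR) // lerDr.
have mu0' : 0 <= mu := ltW mu0.
rewrite exprMn (sqr_sqrtr mu0') in hsr.
have e1 : C * p ^+ 2 <= C * Rr ^+ 2 by apply: ler_wpM2l.
have e2 : mu * (mu * r ^+ 2) <= mu * Rr ^+ 2.
  by apply: ler_wpM2l.
have -> : 8 * mu ^+ 2 * r ^+ 2 = 8 * (mu * (mu * r ^+ 2)) by ring.
lra.
Qed.

End Dev.

Section Sup.
Variable R : realType.

Lemma sup_bounds (alpha : nat -> R) (beta T Rr mu A : R) :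
  0 < alpha 0%N -> (forall k, alpha 0%N <= alpha k) -> 0 < mu -> 0 < A -> 0 < beta ->
  0 <= T -> 0 <= Rr ->
  (0 <= sup_dev alpha beta T Rr mu)%E /\
  (sup_dev alpha beta T Rr mu <=
   (Num.sqrt (2 * (4 / A `^ beta + (mu * A + mu ^+ 2 * A ^+ 3 * T / 2) / alpha 0%N `^ beta)
      * Rr ^+ 2 + 8 * mu * Rr ^+ 2))%:E)%E.
Proof.
move=> a00 a0k mu0 A0 b0 T0 Rr0; split.
  apply: le_ereal_sup_tmp.
  exists (Hnorm (fun k => (Pi1 (Smu alpha mu 0 ((fun _ => 0), (fun _ => 0))) k
       - Sheat alpha 0 (fun _ => 0) k)%R)); last exact: esqrt_ge0.
  have hb : Hbsq alpha beta (fun _ => 0 : R) = 0%E.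
    by apply: eseries0 => i _ _; rewrite expr0n mulr0.
  have hs : Hsq (fun _ => 0 : R) = 0%E.
    by apply: eseries0 => i _ _; rewrite expr0n.
  exists (fun _ => 0), (fun _ => 0), 0; split.
  - by rewrite /inHb hb.
  - by rewrite /inH hs.
  - by rewrite /Hbnorm /Hnormr hb hs /= sqrtr0 mulr0 addr0.
  - by rewrite lexx T0.
  - by [].
apply: ge_ereal_sup => _ [x [y [t [hx hy hR /andP[t0 tT] ->]]]].
exact: dev_bound.
Qed.

End Sup.

Theorem lemma3p2 (R : realType) (alpha : nat -> R)
  (alpha_pos : 0 < alpha 0%N)
  (alpha_mono : forall k, alpha k <= alpha k.+1)
  (alpha_infty : alpha @ \oo --> +oo)
  (T beta : R) (T_pos : 0 < T) (beta_pos : 0 < beta) :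
  forall Rr : R, 0 < Rr ->
    (fun mu : R => sup_dev alpha beta T Rr mu) @ 0^'+ --> 0%E.
Proof.
move=> Rr Rr0.
have a0k : forall k, alpha 0%N <= alpha k.
  by elim=> [|k IH]; [exact: lexx | exact: le_trans IH (alpha_mono k)].
have T0 := ltW T_pos; have Rr0' := ltW Rr0.
have SB := fun mu A (mu0 : 0 < mu) (A0 : 0 < A) =>
  @sup_bounds R alpha beta T Rr mu A alpha_pos a0k mu0 A0 beta_pos T0 Rr0'.
apply/fine_cvgP; split.
  near=> mu.
  have mu0 : 0 < mu by near: mu; exact: nbhs_right_gt.
  have [h1 h2] := SB mu 1 mu0 ltr01.
  rewrite ge0_fin_numE //; exact: le_lt_trans h2 (ltry _).
apply/cvgrPdist_le => /= eps eps0.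
set a0b := alpha 0%N `^ beta.
have a0b0 : 0 < a0b by apply: powR_gt0.
set X := 16 * Rr ^+ 2 / eps ^+ 2.
have X0 : 0 < X by rewrite /X divr_gt0 ?mulr_gt0 ?exprn_gt0.
set A := X `^ beta^-1.
have A0 : 0 < A by apply: powR_gt0.
have AX : A `^ beta = X.
  by rewrite /A -powRrM mulVf ?gt_eqF // powRr1 // ltW.
set K := 2 * ((A + A ^+ 3 * T / 2) / a0b) * Rr ^+ 2 + 8 * Rr ^+ 2.
have K0 : 0 <= K.
  have A3 : 0 <= A ^+ 3 * T / 2.
    by apply: mulr_ge0; [apply: mulr_ge0; [exact: exprn_ge0 (ltW A0)|exact: T0]|rewrite invr_ge0].
  have hAA : 0 <= (A + A ^+ 3 * T / 2) / a0b.
    by apply: divr_ge0; [apply: addr_ge0 => //; exact: ltW|exact: ltW].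
  have R2 : 0 <= Rr ^+ 2 := sqr_ge0 Rr.
  by apply: addr_ge0; [apply: mulr_ge0 => //; apply: mulr_ge0 | apply: mulr_ge0].
set delta := Num.min 1 (eps ^+ 2 / (2 * (K + 1))).
have delta0 : 0 < delta.
  by rewrite /delta lt_min ltr01 /= divr_gt0 ?exprn_gt0 ?mulr_gt0 // ltr_wpDl.
near=> mu.
have mu0 : 0 < mu by near: mu; exact: nbhs_right_gt.
have mud : mu < delta by near: mu; exact: nbhs_right_lt.
have [h1 h2] := SB mu A mu0 A0.
set s := sup_dev alpha beta T Rr mu in h1 h2 *.
rewrite AX in h2.
set B := 2 * (4 / X + (mu * A + mu ^+ 2 * A ^+ 3 * T / 2) / a0b) * Rr ^+ 2
   + 8 * mu * Rr ^+ 2 in h2.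
have hB : B <= eps ^+ 2.
  have dl1 : delta <= 1 by rewrite /delta ge_min lexx.
  have dl2 : delta <= eps ^+ 2 / (2 * (K + 1)) by rewrite /delta ge_min lexx orbT.
  have mu1 : mu <= 1 := ltW (lt_le_trans mud dl1).
  have Rn : Rr != 0 by rewrite gt_eqF.
  have en : eps != 0 by rewrite gt_eqF.
  have an : a0b != 0 by rewrite gt_eqF.
  have K1 : 0 < K + 1 by rewrite ltr_wpDl.
  have Kn : K + 1 != 0 by rewrite gt_eqF.
  have eB : B = eps ^+ 2 / 2 + mu * K
      - 2 * (mu - mu ^+ 2) * (A ^+ 3 * T / 2) / a0b * Rr ^+ 2.
    by rewrite /B /K /X; field; rewrite an en Rn.
  have m2 : mu ^+ 2 <= mu by rewrite expr2 -[X in _ <= X]mulr1 ler_wpM2l // ltW.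
  have t3 : 0 <= 2 * (mu - mu ^+ 2) * (A ^+ 3 * T / 2) / a0b * Rr ^+ 2.
    have A3 : 0 <= A ^+ 3 * T / 2.
      by apply: mulr_ge0; [apply: mulr_ge0; [exact: exprn_ge0 (ltW A0)|exact: T0]|rewrite invr_ge0].
    apply: mulr_ge0; last exact: sqr_ge0.
    apply: divr_ge0; last exact: ltW.
    by apply: mulr_ge0 => //; apply: mulr_ge0 => //; rewrite subr_ge0.
  have t2a : mu * K <= mu * (K + 1) by apply: ler_wpM2l; [exact: ltW|rewrite lerDl].
  have t2b : mu * (K + 1) <= eps ^+ 2 / (2 * (K + 1)) * (K + 1).
    by apply: ler_wpM2r; [exact: ltW|exact: le_trans (ltW mud) dl2].
  have t2c : eps ^+ 2 / (2 * (K + 1)) * (K + 1) = eps ^+ 2 / 2 by field.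
  rewrite eB; lra.
have : (0 <= fine s <= Num.sqrt B).
  move: h1 h2; case: s => [r| |] //=; rewrite !lee_fin => -> ->; by [].
move=> /andP[f0 fB].
rewrite sub0r normrN ger0_norm //.
apply: le_trans fB _.
by rewrite -(ger0_norm (ltW eps0)) -sqrtr_sqr ler_wsqrtr.
Unshelve. all: by end_near.
Qed.
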